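(* For every qubit density matrix $\rho$, $C_g(\rho)+M_g(\rho)\le 1$. Explicitly, writing $\rho=\begin{pmatrix} a & c\\ \bar c & 1-a\end{pmatrix}$ in the computational basis, one has $C_g(\rho)=\frac12\left[1-\sqrt{1-4|c|^2}\right]$ and $M_g(\rho)=\frac12\left\{1+\sqrt{4[a(1-a)-|c|^2]}\right\}$, and equality $C_g(\rho)+M_g(\rho)=1$ holds whenever $a=1/2$ (in particular for all states $\frac{1-p}{2}\mathbb{I}_2+p|\psi_2\rangle\langle\psi_2|$, $p\in[0,1]$, $|\psi_2\rangle=(|0\rangle+|1\rangle)/\sqrt2$).
   Context: Computational basis $\{|0\rangle,|1\rangle\}$ of $\mathbb{C}^2$. Incoherent states are density matrices diagonal in this basis; $\mathcal{I}$ denotes their set. The fidelity is $F(\rho,\sigma)=\left(\mathrm{Tr}\sqrt{\sqrt{\sigma}\rho\sqrt{\sigma}}\right)^2$. The geometric coherence is $C_g(\rho)=1-\max_{\sigma\in\mathcal{I}}F(\rho,\sigma)$. The geometric mixedness of a $d$-dimensional state is $M_g(\rho)=F(\rho,\mathbb{I}/d)=\frac1d\left(\mathrm{Tr}\sqrt{\rho}\right)^2$ (here $d=2$). *)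

(* Defs.v *)
(* MathComp (ssreflect), over an arbitrary numClosedFieldType C
   (the algebraic analogue of the complex numbers, with conjugation ^* and
   the partial order in which 0 <= x means x is real and nonnegative). *)
From HB Require Import structures.
From mathcomp Require Import all_boot all_order all_algebra.
From Stdlib Require Import ClassicalEpsilon.
Set Implicit Arguments. Unset Strict Implicit. Unset Printing Implicit Defensive.
Import Order.TTheory GRing.Theory Num.Theory.
Local Open Scope ring_scope.

Section QInfo.
Variable C : numClosedFieldType.

Definition adjmx m n (M : 'M[C]_(m, n)) : 'M[C]_(n, m) := (map_mx Num.conj M)^T.

Definition hermitian n (M : 'M[C]_n) : Prop := adjmx M = M.

Definition psd n (M : 'M[C]_n) : Prop :=
  hermitian M /\ forall v : 'cV[C]_n, 0 <= (adjmx v *m M *m v) 0 0.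

Definition density n (rho : 'M[C]_n) : Prop := psd rho /\ \tr rho = 1.

Definition incoherent n (sigma : 'M[C]_n) : Prop :=
  density sigma /\ forall i j : 'I_n, i != j -> sigma i j = 0.

Definition psd_sqrt n (A : 'M[C]_n) : 'M[C]_n :=
  epsilon (inhabits 0) (fun S => psd S /\ S *m S = A).

Definition fidelity n (rho sigma : 'M[C]_n) : C :=
  (\tr (psd_sqrt (psd_sqrt sigma *m rho *m psd_sqrt sigma))) ^+ 2.

Definition max_incoherent_fidelity n (rho : 'M[C]_n) : C :=
  epsilon (inhabits 0)
    (fun m => (exists sigma, incoherent sigma /\ fidelity rho sigma = m) /\
              forall sigma, incoherent sigma -> fidelity rho sigma <= m).

Definition Cg n (rho : 'M[C]_n) : C := 1 - max_incoherent_fidelity rho.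

Definition Mg n (rho : 'M[C]_n) : C := fidelity rho ((n%:R)^-1)%:M.

Definition psi2 : 'cV[C]_2 := \col_(i < 2) (sqrtC 2)^-1.

Definition werner (p : C) : 'M[C]_2 :=
  ((1 - p) / 2)%:M + p *: (psi2 *m adjmx psi2).

End QInfo.

(* Main.v *)
Require Import Defs.
From HB Require Import structures.
From mathcomp Require Import all_boot all_order all_algebra.
From mathcomp Require Import ring.
From Stdlib Require Import ClassicalEpsilon.
Import Order.TTheory GRing.Theory Num.Theory.
Local Open Scope ring_scope.
Set Implicit Arguments. Unset Strict Implicit. Unset Printing Implicit Defensive.
Ltac fld := (field; rewrite ?pnatr_eq0 //).

Section H.
Variable C : numClosedFieldType.

Lemma adjmx_mul m n p (A : 'M[C]_(m, n)) (B : 'M[C]_(n, p)) :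
  adjmx (A *m B) = adjmx B *m adjmx A.
Proof. by rewrite /adjmx map_mxM trmx_mul. Qed.

Lemma adjmxK m n (A : 'M[C]_(m, n)) : adjmx (adjmx A) = A.
Proof. by apply/matrixP=> i j; rewrite !mxE conjCK. Qed.

Lemma adjmxE m n (A : 'M[C]_(m, n)) (i : 'I_n) (j : 'I_m) : adjmx A i j = Num.Def.conjC (A j i).
Proof. by rewrite !mxE. Qed.

Lemma herm_entry n (A : 'M[C]_n) (i j : 'I_n) : Defs.hermitian A -> A j i = Num.Def.conjC (A i j).
Proof. by move=> H; rewrite -{1}H adjmxE. Qed.

Lemma psd_conj n (A rho : 'M[C]_n) : Defs.hermitian A -> psd rho -> psd (A *m rho *m A).
Proof.
move=> hA [hr qr]; split.
  by rewrite /Defs.hermitian !adjmx_mul hA hr mulmxA.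
move=> v; have := qr (A *m v).
by rewrite adjmx_mul hA !mulmxA.
Qed.

Lemma det2 (A : 'M[C]_2) : \det A = A 0 0 * A 1 1 - A 0 1 * A 1 0.
Proof.
rewrite (expand_det_row _ 0) !big_ord_recl big_ord0 /cofactor !det_mx11 !mxE /=.
rewrite addr0 /bump /= expr0 expr1 !mul1r mulN1r.
have -> : lift 0 (0 : 'I_1) = 1 :> 'I_2 by apply/val_inj.
have -> : lift 1 (0 : 'I_1) = 0 :> 'I_2 by apply/val_inj.
by rewrite mulrN.
Qed.

Lemma conjN (x : C) : (- x)^* = - x^*. Proof. exact: rmorphN. Qed.
Lemma conjD (x y : C) : (x + y)^* = x^* + y^*. Proof. exact: rmorphD. Qed.
Lemma conjM (x y : C) : (x * y)^* = x^* * y^*. Proof. exact: rmorphM. Qed.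
Lemma conjB (x y : C) : (x - y)^* = x^* - y^*. Proof. exact: rmorphB. Qed.
Lemma conj1 : (1 : C)^* = 1. Proof. exact: rmorph1. Qed.
Lemma conj0 : (0 : C)^* = 0. Proof. exact: rmorph0. Qed.

Lemma sum2 (F : 'I_2 -> C) : \sum_i F i = F 0 + F 1.
Proof.
rewrite big_ord_recl big_ord1; congr (_ + F _); exact: val_inj.
Qed.

Lemma mul2E (A B : 'M[C]_2) i j : (A *m B) i j = A i 0 * B 0 j + A i 1 * B 1 j.
Proof. by rewrite mxE sum2. Qed.

Lemma tr2 (A : 'M[C]_2) : \tr A = A 0 0 + A 1 1.
Proof. by rewrite /mxtrace sum2. Qed.

Definition mk2 (x y : C) : 'cV[C]_2 := \col_(i < 2) (if i == 0 then x else y).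

Lemma qf2 (M : 'M[C]_2) x y :
  (adjmx (mk2 x y) *m M *m mk2 x y) 0 0 =
  x^* * (M 0 0 * x + M 0 1 * y) + y^* * (M 1 0 * x + M 1 1 * y).
Proof.
rewrite !mxE !sum2 !mxE !sum2 !mxE /=.
ring.
Qed.

Lemma psd2P (M : 'M[C]_2) : psd M ->
  [/\ 0 <= M 0 0, 0 <= M 1 1, M 1 0 = (M 0 1)^* & 0 <= \det M].
Proof.
move=> [hM qM].
have h00 : 0 <= M 0 0.
  by have := qM (mk2 1 0); rewrite qf2 rmorph0 rmorph1 !mulr0 !mulr1 !mul0r !addr0 mul1r.
have h11 : 0 <= M 1 1.
  by have := qM (mk2 0 1); rewrite qf2 rmorph0 rmorph1 !mulr0 !mulr1 !mul0r !add0r mul1r.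
have h10 : M 1 0 = (M 0 1)^* by apply: herm_entry.
split => //.
rewrite det2 h10.
move: h00; rewrite le0r => /orP [/eqP p0 | pgt0].
  have := qM (mk2 (M 1 1 + 1) (- (M 0 1)^*)).
  rewrite qf2 h10 p0 conjN conjCK conjD conj1 (geC0_conj h11).
  have -> : (M 1 1 + 1) * (0 * (M 1 1 + 1) + M 0 1 * - (M 0 1)^*) +
    - M 0 1 * ((M 0 1)^* * (M 1 1 + 1) + M 1 1 * - (M 0 1)^*) =
    - ((M 1 1 + 2) * (M 0 1 * (M 0 1)^*)) by ring.
  rewrite oppr_ge0 pmulr_rle0; last by rewrite ltr_wpDl // ltr0n.
  move=> hle.
  have hz : M 0 1 * (M 0 1)^* = 0 by apply/eqP; rewrite eq_le hle mul_conjC_ge0.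
  by rewrite hz mul0r subrr.
have := qM (mk2 (- M 0 1) (M 0 0)).
rewrite qf2 h10 conjN (geC0_conj (ltW pgt0)).
have -> : - (M 0 1)^* * (M 0 0 * - M 0 1 + M 0 1 * M 0 0) +
    M 0 0 * ((M 0 1)^* * - M 0 1 + M 1 1 * M 0 0) =
    M 0 0 * (M 0 0 * M 1 1 - M 0 1 * (M 0 1)^*) by ring.
by rewrite pmulr_rge0.
Qed.

Lemma ord2_cases (i : 'I_2) : i = 0 \/ i = 1.
Proof.
case: i => [[|[|n]]] h.
- by left; apply: val_inj.
- by right; apply: val_inj.
- by [].
Qed.

Lemma mat2_eq (A B : 'M[C]_2) : A 0 0 = B 0 0 -> A 0 1 = B 0 1 ->
  A 1 0 = B 1 0 -> A 1 1 = B 1 1 -> A = B.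
Proof.
move=> h00 h01 h10 h11; apply/matrixP => i j.
by case: (ord2_cases i) => ->; case: (ord2_cases j) => ->.
Qed.

Lemma mk2_eta (v : 'cV[C]_2) : v = mk2 (v 0 0) (v 1 0).
Proof.
apply/matrixP => i j; rewrite !mxE (ord1 j).
by case: (ord2_cases i) => ->.
Qed.

Lemma psd0 n : psd (0 : 'M[C]_n).
Proof.
split; first by apply/matrixP => i j; rewrite !mxE rmorph0.
by move=> v; rewrite mulmx0 mul0mx mxE.
Qed.

Lemma psd_sqrt_ex (M : 'M[C]_2) : psd M -> exists S, psd S /\ S *m S = M.
Proof.
move=> hM; have [h00 h11 h10 hdet] := psd2P hM.
set p := M 0 0 in h00 *; set r := M 1 1 in h11 *; set q := M 0 1 in h10 *.
set t := sqrtC (\det M).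
have t0 : 0 <= t by rewrite sqrtC_ge0.
have tt : t ^+ 2 = p * r - q * q^* by rewrite sqrtCK det2 h10.
set k2 := p + r + 2 * t.
have k20 : 0 <= k2 by rewrite !addr_ge0 // mulr_ge0 // ler0n.
have [k2z | k2nz] := boolP (k2 == 0).
  move: k2z; rewrite /k2 paddr_eq0 ?addr_ge0 ?mulr_ge0 ?ler0n //.
  rewrite paddr_eq0 // mulf_eq0 pnatr_eq0 /= => /andP [/andP [/eqP p0 /eqP r0] /eqP tz].
  have qq : q * q^* = 0.
    by move: tt; rewrite tz p0 r0 expr0n mul0r sub0r => /eqP; rewrite eq_sym oppr_eq0 => /eqP.
  have q0 : q = 0 by apply/eqP; rewrite -mul_conjC_eq0 qq.
  exists 0; split; first exact: psd0.
  by rewrite mulmx0; apply: mat2_eq; rewrite !mxE // h10 q0 conj0.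
set k := sqrtC k2; set ki := k^-1.
have k0 : k != 0 by rewrite sqrtC_eq0.
have ki0 : 0 <= ki by rewrite invr_ge0 sqrtC_ge0.
have kk : ki ^+ 2 * k2 = 1.
  by rewrite /ki exprVn -(sqrtCK k2) -/k mulVf // expf_neq0.
exists (\matrix_(i, j) (ki * (M i j + (i == j)%:R * t))).
split.
  split.
    rewrite /Defs.hermitian; apply: mat2_eq; rewrite !mxE /= !conjM !conjD !conjM (geC0_conj ki0) (geC0_conj t0) ?rmorph_nat.
    - by rewrite (geC0_conj h00).
    - by rewrite -/q h10 conjCK.
    - by rewrite -/q h10.
    - by rewrite (geC0_conj h11).
  move=> v; rewrite (mk2_eta v) qf2 !mxE /=.
  have := (psd2P hM); have := hM.2 (mk2 (v 0 0) (v 1 0)); rewrite qf2 => hq _.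
  set x := v 0 0 in hq *; set y := v 1 0 in hq *.
  have -> : (x^* * (ki * (M 0 0 + 1 * t) * x + ki * (M 0 1 + 0 * t) * y) +
   y^* * (ki * (M 1 0 + 0 * t) * x + ki * (M 1 1 + 1 * t) * y)) =
   ki * ((x^* * (M 0 0 * x + M 0 1 * y) + y^* * (M 1 0 * x + M 1 1 * y)) +
         t * (x * x^* + y * y^*)) by ring.
  by rewrite mulr_ge0 // addr_ge0 // mulr_ge0 // addr_ge0 // mul_conjC_ge0.
rewrite -h10 in tt; apply: mat2_eq; rewrite !mul2E !mxE /= -/p -/q -/r.
- have -> : ki * (p + 1 * t) * (ki * (p + 1 * t)) + ki * (q + 0 * t) * (ki * (M 1 0 + 0 * t))
     = (ki ^+ 2 * k2 - 1) * p + ki ^+ 2 * (t ^+ 2 - (p * r - q * M 1 0)) + p by rewrite /k2; ring.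
  by rewrite kk tt !subrr mul0r mulr0 !add0r.
- have -> : ki * (p + 1 * t) * (ki * (q + 0 * t)) + ki * (q + 0 * t) * (ki * (r + 1 * t))
     = (ki ^+ 2 * k2 - 1) * q + q by rewrite /k2; ring.
  by rewrite kk subrr mul0r add0r.
- have -> : ki * (M 1 0 + 0 * t) * (ki * (p + 1 * t)) + ki * (r + 1 * t) * (ki * (M 1 0 + 0 * t))
     = (ki ^+ 2 * k2 - 1) * M 1 0 + M 1 0 by rewrite /k2; ring.
  by rewrite kk subrr mul0r add0r.
- have -> : ki * (M 1 0 + 0 * t) * (ki * (q + 0 * t)) + ki * (r + 1 * t) * (ki * (r + 1 * t))
     = (ki ^+ 2 * k2 - 1) * r + ki ^+ 2 * (t ^+ 2 - (p * r - q * M 1 0)) + r by rewrite /k2; ring.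
  by rewrite kk tt !subrr mul0r mulr0 !add0r.
Qed.

Lemma psd_sqrt_spec (M : 'M[C]_2) : psd M ->
  psd (psd_sqrt M) /\ psd_sqrt M *m psd_sqrt M = M.
Proof. by move=> hM; apply: (epsilon_spec (inhabits 0) (fun S => psd S /\ S *m S = M)); apply: psd_sqrt_ex. Qed.

Lemma tr_sqrt (S M : 'M[C]_2) : psd S -> S *m S = M ->
  (\tr S) ^+ 2 = \tr M + 2 * sqrtC (\det M).
Proof.
move=> hS hSM; have [_ _ _ hd] := psd2P hS.
have -> : \det M = \det S ^+ 2 by rewrite -hSM det_mulmx expr2.
rewrite sqrCK // -hSM !tr2 !mul2E det2; ring.
Qed.

Lemma fidelity2 (rho sigma : 'M[C]_2) : psd rho -> psd sigma ->
  fidelity rho sigma = \tr (sigma *m rho) + 2 * sqrtC (\det sigma * \det rho).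
Proof.
move=> hr hs; rewrite /fidelity.
have [hR hRR] := psd_sqrt_spec hs.
set R := psd_sqrt sigma in hR hRR *.
have hM : psd (R *m rho *m R) by apply: psd_conj => //; case: hR.
have [hS hSS] := psd_sqrt_spec hM.
rewrite (tr_sqrt hS hSS).
rewrite mxtrace_mulC mulmxA -hRR !det_mulmx; congr (_ + 2 * sqrtC _); ring.
Qed.

Definition dg2 (s1 s2 : C) : 'M[C]_2 :=
  \matrix_(i, j) ((i == j)%:R * (if i == 0 then s1 else s2)).

Lemma psd_dg2 s1 s2 : 0 <= s1 -> 0 <= s2 -> psd (dg2 s1 s2).
Proof.
move=> h1 h2; split.
  apply: mat2_eq; rewrite !mxE /= ?conjM ?rmorph_nat ?(geC0_conj h1) ?(geC0_conj h2) ?mul0r //.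
move=> v; rewrite (mk2_eta v) qf2 !mxE /=.
have -> : (v 0 0)^* * (1 * s1 * v 0 0 + 0 * s1 * v 1 0) + (v 1 0)^* * (0 * s2 * v 0 0 + 1 * s2 * v 1 0)
  = s1 * (v 0 0 * (v 0 0)^*) + s2 * (v 1 0 * (v 1 0)^*) by ring.
by rewrite addr_ge0 // mulr_ge0 // mul_conjC_ge0.
Qed.

Lemma inc_dg2 s1 : 0 <= s1 -> 0 <= 1 - s1 -> incoherent (dg2 s1 (1 - s1)).
Proof.
move=> h1 h2; split; first split.
- exact: psd_dg2.
- by rewrite tr2 !mxE /= !mul1r addrC subrK.
- by move=> i j /negbTE hij; rewrite mxE hij mul0r.
Qed.

Lemma scalar_dg2 (k : C) : (k%:M : 'M[C]_2) = dg2 k k.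
Proof. by apply: mat2_eq; rewrite !mxE /= ?mulr1n ?mulr0n ?mul1r ?mul0r. Qed.

Lemma cs_bound (al be X Y : C) : al \is Num.real -> be \is Num.real ->
  X \is Num.real -> Y \is Num.real -> al ^+ 2 + be ^+ 2 = 1 ->
  al * X + be * Y <= sqrtC (X ^+ 2 + Y ^+ 2).
Proof.
move=> ra rb rX rY hab.
have X2 : 0 <= X ^+ 2 by rewrite -realEsqr.
have Y2 : 0 <= Y ^+ 2 by rewrite -realEsqr.
set T := X ^+ 2 + Y ^+ 2.
have T0 : 0 <= T by rewrite addr_ge0.
have [Tz | Tnz] := boolP (T == 0).
  move: Tz; rewrite /T paddr_eq0 // !expf_eq0 /= => /andP [/eqP -> /eqP ->].
  by rewrite !mulr0 addr0 expr0n addr0 sqrtC0.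
set r := sqrtC T.
have r0 : 0 < r by rewrite sqrtC_gt0 lt_def Tnz T0.
have rr : r ^+ 2 = T by rewrite sqrtCK.
have rR : r \is Num.real by rewrite ger0_real // ltW.
have rn0 : r != 0 by rewrite gt_eqF.
rewrite -/r -subr_ge0; clearbody r.
have -> : r - (al * X + be * Y) =
  ((al * r - X) ^+ 2 + (be * r - Y) ^+ 2 + (1 - (al ^+ 2 + be ^+ 2)) * r ^+ 2 + (r ^+ 2 - (X ^+ 2 + Y ^+ 2))) / (2 * r).
  by fld.
rewrite hab subrr mul0r addr0 rr subrr addr0.
rewrite divr_ge0 // ?addr_ge0 -?realEsqr ?rpredB ?rpredM //.
by rewrite mulr_ge0 ?ler0n // ltW.
Qed.

Lemma dens_facts (rho : 'M[C]_2) : density rho ->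
  [/\ 0 <= rho 0 0, rho 1 1 = 1 - rho 0 0, 0 <= 1 - rho 0 0,
      rho 1 0 = (rho 0 1)^* &
      \det rho = rho 0 0 * (1 - rho 0 0) - rho 0 1 * (rho 0 1)^* /\ 0 <= \det rho].
Proof.
move=> [hp htr]; have [h00 h11 h10 hd] := psd2P hp.
have e11 : rho 1 1 = 1 - rho 0 0 by rewrite -htr tr2 addrAC subrr add0r.
split => //; first by rewrite -e11.
by split => //; rewrite det2 e11 h10.
Qed.

Lemma F_inc (rho sigma : 'M[C]_2) : density rho -> incoherent sigma ->
  fidelity rho sigma = 2^-1 + 2^-1 * ((2 * sigma 0 0 - 1) * (2 * rho 0 0 - 1) +
     (2 * sqrtC (sigma 0 0 * (1 - sigma 0 0))) * (2 * sqrtC (\det rho))).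
Proof.
move=> hr [hs hoff].
have [a0 e11 a1 e10 [ed d0]] := dens_facts hr.
have [s0 f11 s1 f10 [fd _]] := dens_facts hs.
have o01 : sigma 0 1 = 0 by apply: hoff.
rewrite fidelity2 //; [|exact: hr.1|exact: hs.1].
rewrite fd o01 rmorph0 mulr0 subr0 (@sqrtCM _ (sigma 0 0 * (1 - sigma 0 0)) (\det rho)) ?nnegrE ?mulr_ge0 //.
rewrite tr2 !mul2E f11 e11 f10 o01 rmorph0.
by fld.
Qed.

Lemma Mg_val (rho : 'M[C]_2) : density rho ->
  Mg rho = 2^-1 * (1 + sqrtC (4 * (rho 0 0 * (1 - rho 0 0) - `|rho 0 1| ^+ 2))).
Proof.
move=> hr; have [a0 e11 a1 e10 [ed d0]] := dens_facts hr.
rewrite normCK -ed /Mg.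
have k0 : 0 <= (2%:R : C)^-1 by rewrite invr_ge0 ler0n.
rewrite fidelity2; [|exact: hr.1| by rewrite scalar_dg2; apply: psd_dg2].
rewrite mul_scalar_mx mxtraceZ hr.2 det_scalar.
have -> : (2%:R : C)^-1 ^+ 2 * \det rho = ((2%:R : C)^-1 ^+ 2) ^+ 2 * (4 * \det rho).
  by fld.
rewrite (@sqrtCM _ ((2%:R : C)^-1 ^+ 2 ^+ 2) (4 * \det rho)) ?nnegrE ?exprn_ge0 ?mulr_ge0 ?ler0n // sqrCK ?exprn_ge0 //.
by fld.
Qed.

Lemma maxF_val (rho : 'M[C]_2) : density rho ->
  max_incoherent_fidelity rho =
  2^-1 * (1 + sqrtC ((2 * rho 0 0 - 1) ^+ 2 + (2 * sqrtC (\det rho)) ^+ 2)).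
Proof.
move=> hr; have [a0 e11 a1 e10 [ed d0]] := dens_facts hr.
set X := 2 * rho 0 0 - 1; set Y := 2 * sqrtC (\det rho).
set T := X ^+ 2 + Y ^+ 2; set m0 := 2^-1 * (1 + sqrtC T).
have rX : X \is Num.real by rewrite rpredB ?rpredM ?ger0_real ?ler0n.
have rY : Y \is Num.real by rewrite rpredM ?ger0_real ?ler0n ?sqrtC_ge0.
have Y0 : 0 <= Y by rewrite mulr_ge0 ?ler0n ?sqrtC_ge0.
have two0 : (2%:R : C) != 0 by rewrite pnatr_eq0.
have bound : forall sigma, incoherent sigma -> fidelity rho sigma <= m0.
  move=> sigma hs; rewrite F_inc //.
  have [s0 _ s1 _ _] := dens_facts hs.1.
  set al := 2 * sigma 0 0 - 1; set be := 2 * sqrtC (sigma 0 0 * (1 - sigma 0 0)).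
  have hab : al ^+ 2 + be ^+ 2 = 1 by rewrite /be exprMn sqrtCK /al; ring.
  have hb : al * X + be * Y <= sqrtC T.
    apply: cs_bound => //; rewrite ?rpredB ?rpredM ?ger0_real ?ler0n ?sqrtC_ge0 ?mulr_ge0 ?rpred1 //.
  rewrite -subr_ge0 /m0.
  have -> : 2^-1 * (1 + sqrtC T) - (2^-1 + 2^-1 * (al * X + be * Y)) =
     2^-1 * (sqrtC T - (al * X + be * Y)) by ring.
  by rewrite mulr_ge0 ?invr_ge0 ?ler0n // subr_ge0.
have wit : exists sigma, incoherent sigma /\ fidelity rho sigma = m0.
  have X2 : 0 <= X ^+ 2 by rewrite -realEsqr.
  have Y2 : 0 <= Y ^+ 2 by rewrite -realEsqr.
  have T0 : 0 <= T by rewrite addr_ge0.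
  have [Tz | Tnz] := boolP (T == 0).
    have hk : 0 <= (2%:R : C)^-1 by rewrite invr_ge0 ler0n.
    have hk1 : 0 <= 1 - (2%:R : C)^-1.
      by rewrite (_ : 1 - 2^-1 = 2^-1) //; fld.
    exists (dg2 2^-1 (1 - 2^-1)); split; first exact: inc_dg2.
    move: (Tz); rewrite /T paddr_eq0 // !expf_eq0 /= => /andP [/eqP hX /eqP hY].
    rewrite F_inc //; last exact: inc_dg2.
    rewrite -/X -/Y hX hY /m0 (eqP Tz) sqrtC0 !mulr0 addr0; fld.
  set r := sqrtC T.
  have r0 : 0 < r by rewrite sqrtC_gt0 lt_def Tnz T0.
  have rn0 : r != 0 by rewrite gt_eqF.
  have rr : r ^+ 2 = T by rewrite sqrtCK.
  set s := 2^-1 * (1 + X / r).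
  have hab : (X / r) ^+ 2 + (Y / r) ^+ 2 = 1.
    have -> : (X / r) ^+ 2 + (Y / r) ^+ 2 = T / r ^+ 2 by rewrite /T; fld.
    by rewrite rr divff // -rr expf_neq0.
  have rXr : X / r \is Num.real by rewrite rpredM ?rpredV // ger0_real // ltW.
  have rYr : Y / r \is Num.real by rewrite rpredM ?rpredV // ger0_real // ltW.
  have hs0 : 0 <= s.
    have -> : s = ((1 + X / r) ^+ 2 + (Y / r) ^+ 2) / 4.
      have -> : ((1 + X / r) ^+ 2 + (Y / r) ^+ 2) = 2 + 2 * (X / r) + ((X / r) ^+ 2 + (Y / r) ^+ 2 - 1) by ring.
      by rewrite hab subrr addr0 /s; fld.
    by rewrite divr_ge0 ?ler0n // addr_ge0 // -realEsqr ?rpredD ?rpred1.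
  have hs1 : 0 <= 1 - s.
    have -> : 1 - s = ((1 - X / r) ^+ 2 + (Y / r) ^+ 2) / 4.
      have -> : ((1 - X / r) ^+ 2 + (Y / r) ^+ 2) = 2 - 2 * (X / r) + ((X / r) ^+ 2 + (Y / r) ^+ 2 - 1) by ring.
      by rewrite hab subrr addr0 /s; fld.
    by rewrite divr_ge0 ?ler0n // addr_ge0 // -realEsqr ?rpredB ?rpred1.
  exists (dg2 s (1 - s)); split; first exact: inc_dg2.
  rewrite F_inc //; last exact: inc_dg2.
  rewrite -/X -/Y !mxE /= mul1r.
  have -> : s * (1 - s) = (Y / r / 2) ^+ 2.
    have -> : s * (1 - s) = (Y / r / 2) ^+ 2 + (1 - ((X / r) ^+ 2 + (Y / r) ^+ 2)) / 4.
      by rewrite /s; fld.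
    by rewrite hab subrr mul0r addr0.
  rewrite sqrCK; last by rewrite divr_ge0 ?ler0n // divr_ge0 // ltW.
  have -> : 2^-1 + 2^-1 * ((2 * s - 1) * X + 2 * (Y / r / 2) * Y) = 2^-1 * (1 + T / r).
    by rewrite /s /T; fld.
  by rewrite /m0 -/r -rr expr2 mulfK.
have P0 : (exists sigma, incoherent sigma /\ fidelity rho sigma = m0) /\
          (forall sigma, incoherent sigma -> fidelity rho sigma <= m0) by [].
have := epsilon_spec (inhabits 0) (fun m => (exists sigma, incoherent sigma /\ fidelity rho sigma = m) /\
              forall sigma, incoherent sigma -> fidelity rho sigma <= m) (ex_intro _ m0 P0).
rewrite /max_incoherent_fidelity.
set e := epsilon _ _ => -[[s1 [hs1 <-]] hb].
apply/eqP; rewrite eq_le bound //=.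
have [s0 [hs0 <-]] := wit; exact: hb.
Qed.

Lemma part1 (rho : 'M[C]_2) : density rho ->
     let a := rho ord0 ord0 in
     let c := rho ord0 ord_max in
     [/\ Cg rho + Mg rho <= 1,
         Cg rho = 2^-1 * (1 - sqrtC (1 - 4 * `|c| ^+ 2)),
         Mg rho = 2^-1 * (1 + sqrtC (4 * (a * (1 - a) - `|c| ^+ 2)))
       & a = 2^-1 -> Cg rho + Mg rho = 1].
Proof.
move=> hr a c.
have ea : a = rho 0 0 by [].
have ec : c = rho 0 1 by rewrite /c; congr (rho _ _); apply: val_inj.
have [a0 e11 a1 e10 [ed d0]] := dens_facts hr.
have eT : (2 * rho 0 0 - 1) ^+ 2 + (2 * sqrtC (\det rho)) ^+ 2 = 1 - 4 * `|c| ^+ 2.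
  by rewrite exprMn sqrtCK ed ec normCK; ring.
have hC : Cg rho = 2^-1 * (1 - sqrtC (1 - 4 * `|c| ^+ 2)).
  by rewrite /Cg maxF_val // eT; fld.
have hM : Mg rho = 2^-1 * (1 + sqrtC (4 * (a * (1 - a) - `|c| ^+ 2))).
  by rewrite Mg_val // ea ec.
have eD : 4 * (a * (1 - a) - `|c| ^+ 2) = 4 * \det rho by rewrite ed ea ec normCK.
have eT2 : 1 - 4 * `|c| ^+ 2 = (2 * a - 1) ^+ 2 + 4 * \det rho.
  by rewrite -eT exprMn sqrtCK -ea; ring.
have hsum : Cg rho + Mg rho = 1 + 2^-1 * (sqrtC (4 * \det rho) - sqrtC ((2 * a - 1) ^+ 2 + 4 * \det rho)).
  by rewrite hC hM eD eT2; fld.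
have ra : a \is Num.real by rewrite ger0_real.
have sq0 : 0 <= (2 * a - 1) ^+ 2 by rewrite -realEsqr rpredB ?rpredM ?rpred1 ?rpred_nat.
have D4 : 0 <= 4 * \det rho by rewrite mulr_ge0 ?ler0n.
split => //.
- rewrite hsum gerDl pmulr_rle0 ?invr_gt0 ?ltr0n // subr_le0.
  by rewrite ler_sqrtC ?nnegrE ?addr_ge0 // lerDr.
- move=> ha; rewrite hsum ha.
  have -> : 2 * (2%:R : C)^-1 - 1 = 0 by fld.
  by rewrite expr0n add0r subrr mulr0 addr0.
Qed.

Lemma wernerE (p : C) (i j : 'I_2) :
  werner p i j = if i == j then 2^-1 else p * 2^-1.
Proof.
rewrite /werner !mxE big_ord1 !mxE /=.
set r := (sqrtC 2)^-1.
have r0 : 0 <= r by rewrite invr_ge0 sqrtC_ge0 ler0n.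
have rr : r * r^* = 2^-1 by rewrite (geC0_conj r0) -expr2 exprVn sqrtCK.
rewrite rr; case: (i == j) => /=; rewrite ?mulr1n ?mulr0n ?add0r //.
fld.
Qed.

Lemma werner_dens (p : C) : 0 <= p <= 1 -> density (werner p).
Proof.
move=> /andP [p0 p1].
have k0 : 0 <= (2%:R : C)^-1 by rewrite invr_ge0 ler0n.
split; last by rewrite tr2 !wernerE /=; fld.
split.
  apply: mat2_eq; rewrite !adjmxE !wernerE /= ?conjM (geC0_conj k0) ?(geC0_conj p0) //.
move=> v; rewrite (mk2_eta v) qf2 !wernerE /=.
set x := v 0 0; set y := v 1 0.
have -> : x^* * (2^-1 * x + p * 2^-1 * y) + y^* * (p * 2^-1 * x + 2^-1 * y) =
  (1 - p) * 2^-1 * (x * x^* + y * y^*) + p * 2^-1 * ((x + y) * (x + y)^*).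
  by rewrite conjD; ring.
have h2 : 0 <= (2%:R : C)^-1 by rewrite invr_ge0 ler0n.
apply: addr_ge0; apply: mulr_ge0.
- by apply: mulr_ge0; rewrite ?subr_ge0.
- by apply: addr_ge0; exact: mul_conjC_ge0.
- exact: mulr_ge0.
- exact: mul_conjC_ge0.
Qed.
End H.

Theorem mainTheorem4 (C : numClosedFieldType) :
  (forall rho : 'M[C]_2, density rho ->
     let a := rho ord0 ord0 in
     let c := rho ord0 ord_max in
     [/\ Cg rho + Mg rho <= 1,
         Cg rho = 2^-1 * (1 - sqrtC (1 - 4 * `|c| ^+ 2)),
         Mg rho = 2^-1 * (1 + sqrtC (4 * (a * (1 - a) - `|c| ^+ 2)))
       & a = 2^-1 -> Cg rho + Mg rho = 1]) /\
  (forall p : C, 0 <= p <= 1 -> Cg (werner p) + Mg (werner p) = 1).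
Proof.
split; first exact: part1.
move=> p hp; have hw := werner_dens hp.
have [_ _ _ h] := part1 hw; apply: h.
by rewrite (wernerE p ord0 ord0).
Qed.
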